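(* Let $R$ be a commutative Noetherian ring, $I\subseteq R$ an ideal, and $(F_\bullet,d_\bullet)$ a free resolution of $R/I$ with $F_0=R$. Assume that for each $i\ge0$ there is an $R$-bilinear product $\cdot:F_1\otimes_R F_i\to F_{i+1}$ satisfying, for all $f_1\in F_1$, $f_i\in F_i$: (a) $d_{i+1}(f_1\cdot f_i)=d_1(f_1)f_i-f_1\cdot d_i(f_i)$, and (b) $f_1\cdot(f_1\cdot f_i)=0$. Then for any ideal $\mathfrak{a}\subseteq I$ generated by a regular sequence, $F_\bullet$ is a DG-module over the Koszul complex $K_\bullet$ resolving $R/\mathfrak{a}$.
   Context: A DG $K_\bullet$-module structure on $F_\bullet$ is a unital, associative action $K_p\otimes_R F_q\to F_{p+q}$ of the Koszul complex (viewed as the exterior algebra DG-algebra) satisfying $d(x\cdot f)=d(x)\cdot f+(-1)^{|x|}x\cdot d(f)$. *)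

(* Defs.v *)
From HB Require Import structures.
From mathcomp Require Import all_boot all_order all_algebra.
Set Implicit Arguments. Unset Strict Implicit. Unset Printing Implicit Defensive.
Import Order.TTheory GRing.Theory Num.Theory.
Local Open Scope ring_scope.

Section Ideals.
Variable R : comPzRingType.

Definition is_ideal (I : R -> Prop) : Prop :=
  [/\ I 0, (forall a b, I a -> I b -> I (a + b)) & (forall r a, I a -> I (r * a))].

Definition ideal_gen_prefix (n : nat) (x : 'I_n -> R) (k : nat) (r : R) : Prop :=
  exists c : 'I_n -> R, r = \sum_(i < n | (i < k)%N) c i * x i.

Definition ideal_gen (n : nat) (x : 'I_n -> R) (r : R) : Prop :=
  ideal_gen_prefix x n r.

Definition noetherian : Prop :=
  forall J : R -> Prop, is_ideal J ->
    exists (m : nat) (g : 'I_m -> R), forall r, J r <-> ideal_gen g r.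

Definition regular_sequence (n : nat) (x : 'I_n -> R) : Prop :=
  (forall (k : 'I_n) (r : R),
      ideal_gen_prefix x k (x k * r) -> ideal_gen_prefix x k r)
  /\ ~ ideal_gen x 1.
End Ideals.

Section Modules.
Variable R : comPzRingType.

Definition free_module (M : lmodType R) : Prop :=
  exists (B : eqType) (b : B -> M),
    (forall v : M, exists (s : seq B) (c : B -> R), v = \sum_(k <- s) c k *: b k)
    /\ (forall (s : seq B) (c : B -> R), uniq s ->
          \sum_(k <- s) c k *: b k = 0 -> forall k, k \in s -> c k = 0).

Definition is_linear (M N : lmodType R) (f : M -> N) : Prop :=
  forall (a : R) (u v : M), f (a *: u + v) = a *: f u + f v.

Definition is_bilinear (M N P : lmodType R) (m : M -> N -> P) : Prop :=
  (forall u, is_linear (m u)) /\ (forall v, is_linear (fun u => m u v)).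

Definition castF (F : nat -> lmodType R) (m n : nat) (e : m = n) (v : F m) : F n :=
  eq_rect m (fun k => F k : Type) v n e.
End Modules.

(* A complex is given by modules F i and maps d i : F_(i+1) -> F_i
   (d i is the paper's d_(i+1)); phi0 identifies F_0 with R. *)
Definition free_resolution_of_quotient (R : comPzRingType) (I : R -> Prop)
    (F : nat -> lmodType R) (d : forall i, F i.+1 -> F i) (phi0 : F 0%N -> R) : Prop :=
  [/\ (forall i, free_module (F i)),
      (forall i, is_linear (d i)),
      (is_linear (phi0 : F 0%N -> R^o) /\ bijective phi0),
      ((forall i (v : F i.+2), d i (d i.+1 v) = 0) /\
       (forall i (v : F i.+1), d i v = 0 -> exists w : F i.+2, d i.+1 w = v))
    & (* H_0 = R / I, i.e. image of d_1 in F_0 = R is I *)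
      (forall r : R, I r <-> exists w : F 1%N, phi0 (d 0%N w) = r)].

(* K = exterior algebra on e_0,...,e_(n-1), with R-basis e_S, S subset of 'I_n,
   e_S = e_(s1) /\ ... /\ e_(sp) for s1 < ... < sp.  K_p = span of e_S, |S| = p. *)
Section Koszul.
Variable R : comPzRingType.
Variable n : nat.
Variable x : 'I_n -> R.

Definition koszul : lmodType R := {ffun {set 'I_n} -> R^o}.

Definition kz_homogeneous (p : nat) (a : koszul) : Prop :=
  forall S : {set 'I_n}, #|S| != p -> a S = 0.

Definition kz_one : koszul := [ffun S => (S == set0)%:R].

(* e_S /\ e_T = (-1)^#{(s,t) in S x T | t < s} e_(S u T) if S, T disjoint, 0 else *)
Definition kz_sign (S T : {set 'I_n}) : R :=
  (-1) ^+ #|[set st : 'I_n * 'I_n | (st.1 \in S) && (st.2 \in T) && (st.2 < st.1)%N]|.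

Definition kz_wedge (a b : koszul) : koszul :=
  [ffun U : {set 'I_n} => \sum_(S : {set 'I_n}) \sum_(T : {set 'I_n})
      (if (S :|: T == U) && [disjoint S & T] then kz_sign S T * a S * b T else 0)].

(* d(e_S) = sum_(k in S) (-1)^#{s in S | s < k} x_k e_(S \ k) *)
Definition kz_d (a : koszul) : koszul :=
  [ffun U : {set 'I_n} => \sum_(k : 'I_n | k \notin U)
      (-1) ^+ #|[set s in U | (s < k)%N]| * x k * a (k |: U)].
End Koszul.

(* act p q a f = a . f for a in K_p, f in F_q, landing in F_(p+q).
   The Leibniz rule d(a.f) = d(a).f + (-1)^p a.d(f) is split according to
   whether p and q are zero (d vanishes on K_0 and on F_0). *)
Definition DG_koszul_module (R : comPzRingType) (n : nat) (x : 'I_n -> R)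
    (F : nat -> lmodType R) (d : forall i, F i.+1 -> F i)
    (act : forall p q, koszul R n -> F q -> F (p + q)%N) : Prop :=
  [/\
      (forall p q, is_bilinear (act p q)) /\
      (forall q (f : F q), act 0%N q (kz_one R n) f = f),
      (forall p p' q (a b : koszul R n) (f : F q),
          kz_homogeneous p a -> kz_homogeneous p' b ->
          act p (p' + q)%N a (act p' q b f)
          = castF (esym (addnA p p' q)) (act (p + p')%N q (kz_wedge a b) f)),
      (forall j (a : koszul R n) (f : F j.+1), kz_homogeneous 0 a ->
          d j (act 0%N j.+1 a f) = act 0%N j a (d j f)),
      (forall i (a : koszul R n) (f : F 0%N), kz_homogeneous i.+1 a ->
          d (i + 0)%N (act i.+1 0%N a f) = act i 0%N (kz_d x a) f)
    &
      (forall i j (a : koszul R n) (f : F j.+1), kz_homogeneous i.+1 a ->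
          d (i + j.+1)%N (act i.+1 j.+1 a f)
          = act i j.+1 (kz_d x a) f
            + (-1) ^+ i.+1 *: castF (esym (addnS i j)) (act i.+1 j a (d j f)))].

(* Main.v *)
Require Import Defs.
From HB Require Import structures.
From mathcomp Require Import all_boot all_order all_algebra.
Set Implicit Arguments. Unset Strict Implicit. Unset Printing Implicit Defensive.
Import GRing.Theory.
Local Open Scope ring_scope.

Lemma kzZ (R : comPzRingType) n (c : R) (f : koszul R n) S : (c *: f) S = c * f S.
Proof. by rewrite ffunE. Qed.
Lemma kzD (R : comPzRingType) n (f g : koszul R n) S : (f + g) S = f S + g S.
Proof. by rewrite ffunE. Qed.
Lemma kzN (R : comPzRingType) n (f : koszul R n) S : (- f) S = - f S.
Proof. by rewrite ffunE. Qed.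
Lemma kzB (R : comPzRingType) n (f g : koszul R n) S : (f - g) S = f S - g S.
Proof. by rewrite !ffunE. Qed.
Lemma kz0 (R : comPzRingType) n S : (0 : koszul R n) S = 0.
Proof. by rewrite ffunE. Qed.

Section KZ.
Variable R : comPzRingType.
Variable n : nat.
Local Notation K := (koszul R n).

Definition lower (l : 'I_n) (T : {set 'I_n}) : bool := [forall t in T, (l < t)%N].
Definition tail (l : 'I_n) (a : K) : K :=
  [ffun T : {set 'I_n} => if lower l T then a (l |: T) else 0].
Definition lw (l : 'I_n) (a : K) : K :=
  [ffun U : {set 'I_n} => if l \in U then (-1) ^+ #|[set s in U | (s < l)%N]| * a (U :\ l) else 0].
Definition restr (k : 'I_n) (a : K) : K := [ffun T : {set 'I_n} => if lower k T then a T else 0].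

Lemma tailE l a T : tail l a T = if lower l T then a (l |: T) else 0.
Proof. by rewrite ffunE. Qed.
Lemma lwE l a U : lw l a U =
  if l \in U then (-1) ^+ #|[set s in U | (s < l)%N]| * a (U :\ l) else 0.
Proof. by rewrite ffunE. Qed.
Lemma kz_dE (x : 'I_n -> R) (a : K) U : kz_d x a U = \sum_(k : 'I_n | k \notin U)
      (-1) ^+ #|[set s in U | (s < k)%N]| * x k * a (k |: U).
Proof. by rewrite ffunE. Qed.

Lemma card_ltU1 (l k : 'I_n) (T : {set 'I_n}) : l \notin T ->
  #|[set s in l |: T | (s < k)%N]| = ((l < k)%N + #|[set s in T | (s < k)%N]|)%N.
Proof.
move=> lT; case: (ltnP l k) => hlk.
  have -> : [set s in l |: T | (s < k)%N] = l |: [set s in T | (s < k)%N].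
    apply/setP => s; rewrite !inE; case: (eqVneq s l) => [->|] //=.
  by rewrite cardsU1 inE (negbTE lT).
have -> : [set s in l |: T | (s < k)%N] = [set s in T | (s < k)%N].
  apply/setP => s; rewrite !inE; case: (eqVneq s l) => [->|] //=.
  by rewrite (negbTE lT) /= ltnNge hlk.
by [].
Qed.

Lemma lowerP (l : 'I_n) (T : {set 'I_n}) : reflect (forall t, t \in T -> (l < t)%N) (lower l T).
Proof. exact: forall_inP. Qed.

Lemma lower_notin (l : 'I_n) (T : {set 'I_n}) : lower l T -> l \notin T.
Proof. by move=> /lowerP H; apply/negP => /H; rewrite ltnn. Qed.

Lemma card_lt0 (k : 'I_n) (T : {set 'I_n}) : (forall t, t \in T -> (k <= t)%N) ->
  #|[set s in T | (s < k)%N]| = 0%N.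
Proof.
move=> H; apply/eqP; rewrite cards_eq0; apply/eqP/setP => s; rewrite !inE.
by apply/negP => /andP [/H h1 h2]; move: (leq_trans h2 h1); rewrite ltnn.
Qed.

Lemma tail_lin (l : 'I_n) (c : R) (a b : K) : tail l (c *: a + b) = c *: tail l a + tail l b.
Proof.
apply/ffunP => T; rewrite !ffunE; case: ifP => _; rewrite ?ffunE //.
by rewrite scaler0 addr0.
Qed.

Lemma T1 (k : 'I_n) (a : K) : tail k (lw k a) = restr k a.
Proof.
apply/ffunP => T; rewrite !ffunE; case: ifP => // hl.
rewrite setU11 setU1K ?lower_notin // card_ltU1 ?lower_notin // ltnn add0n.
rewrite card_lt0 ?expr0 ?mul1r // => t /(lowerP _ _ hl) /ltnW //.
Qed.

Lemma T2 (l k : 'I_n) (a : K) : (l < k)%N -> tail l (lw k a) = - lw k (tail l a).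
Proof.
move=> hlk; apply/ffunP => T; rewrite !ffunE.
have hne : k != l by apply/eqP => e; move: hlk; rewrite e ltnn.
have lowD : lower l (T :\ k) = lower l T.
  apply/lowerP/lowerP => H t ht.
    by case: (eqVneq t k) => [->//|ne]; apply: H; rewrite !inE ne.
  by apply: H; move: ht; rewrite inE => /andP [].
case: ifP => hl.
  rewrite ?ffunE !inE (negbTE hne) /=.
  case: ifP => hk; last by rewrite oppr0.
  rewrite ?ffunE lowD hl card_ltU1 ?lower_notin // hlk add1n exprS mulN1r mulNr.
  congr (- (_ * a _)); apply/setP => s; rewrite !inE.
  by case: (eqVneq s k) => //= ->; rewrite (negbTE hne).
case: ifP; last by rewrite oppr0.
by rewrite ?ffunE lowD hl mulr0 oppr0.
Qed.

Lemma T3 (l k : 'I_n) (a : K) : (k < l)%N -> tail l (lw k a) = 0.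
Proof.
move=> hkl; apply/ffunP => T; rewrite !ffunE; case: ifP => // hl.
rewrite ?ffunE !inE; case: (eqVneq k l) => [e|ne] /=.
  by move: hkl; rewrite e ltnn.
case: ifP => // /(lowerP _ _ hl) h.
by move: (ltn_trans h hkl); rewrite ltnn.
Qed.

Lemma T4 (l k : 'I_n) (a : K) : tail l (restr k a) = if (k < l)%N then tail l a else 0.
Proof.
apply/ffunP => T; case: ifP => hkl; rewrite !ffunE; case: ifP => // hl.
  rewrite ?ffunE; case: ifP => // /negP; case; apply/lowerP => t.
  rewrite !inE => /orP [/eqP ->//| /(lowerP _ _ hl)]; exact: ltn_trans.
rewrite ?ffunE; case: ifP => // /lowerP H.
by rewrite H ?setU11 in hkl.
Qed.

Lemma tail_hom p (l : 'I_n) (a : K) : kz_homogeneous p.+1 a -> kz_homogeneous p (tail l a).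
Proof.
move=> H T hT; rewrite ?ffunE; case: ifP => // hl; apply: H.
by rewrite cardsU1 lower_notin.
Qed.

Lemma Ddec (a : K) : a set0 = 0 -> a = \sum_l lw l (tail l a).
Proof.
move=> a0; apply/ffunP => U; rewrite sum_ffunE.
case: (set_0Vmem U) => [->|[i0 hi0]].
  by rewrite a0 big1 // => l _; rewrite ?ffunE inE.
case: (arg_minnP (fun i : 'I_n => nat_of_ord i) hi0) => l0 hl0' hmin'.
have hl0 : l0 \in U := hl0'.
have hmin : forall j, j \in U -> (l0 <= j)%N := hmin'.
rewrite (bigD1 l0) //= big1 ?addr0.
  rewrite !ffunE hl0 card_lt0 // expr0 mul1r.
  have -> : lower l0 (U :\ l0).
    apply/lowerP => t; rewrite !inE => /andP [ne ht].
    rewrite ltn_neqAle hmin // andbT; apply/negP => /eqP e.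
    by move/eqP: ne; apply; apply: val_inj.
  by rewrite setD1K.
move=> l hne; rewrite !ffunE; case: ifP => // hl.
case: ifP; last by rewrite mulr0.
move=> /lowerP H; have : l0 \in U :\ l by rewrite !inE eq_sym hne.
move=> /H; rewrite ltnNge hmin //.
Qed.


Lemma disjU1 (l : 'I_n) (S T : {set 'I_n}) : l \notin T ->
  [disjoint l |: S & T] = [disjoint S & T].
Proof.
move=> h; rewrite -!setI_eq0 setIUl.
have -> : [set l] :&: T = set0.
  by apply/setP => s; rewrite !inE; case: eqVneq => // ->; rewrite (negbTE h).
by rewrite set0U.
Qed.

Lemma card_ltU (k : 'I_n) (S T : {set 'I_n}) : [disjoint S & T] ->
  #|[set s in S :|: T | (s < k)%N]| =
  (#|[set s in S | (s < k)%N]| + #|[set s in T | (s < k)%N]|)%N.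
Proof.
move=> hd.
have -> : [set s in S :|: T | (s < k)%N] =
   [set s in S | (s < k)%N] :|: [set s in T | (s < k)%N].
  by apply/setP => s; rewrite !inE andb_orl.
rewrite cardsU.
have -> : [set s in S | (s < k)%N] :&: [set s in T | (s < k)%N] = set0.
  apply/setP => s; rewrite !inE; apply/negP => /andP [/andP [hS _] /andP [hT _]].
  by move: (disjointFr hd hS); rewrite hT.
by rewrite cards0 subn0.
Qed.

Lemma sign_U1 (l : 'I_n) (S T : {set 'I_n}) : l \notin S ->
  kz_sign R (l |: S) T = (-1) ^+ #|[set t in T | (t < l)%N]| * kz_sign R S T.
Proof.
move=> hS; rewrite /kz_sign -exprD; congr (_ ^+ _).
have -> : [set st : 'I_n * 'I_n | (st.1 \in l |: S) && (st.2 \in T) && (st.2 < st.1)%N]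
  = [set (l, t) | t in [set t in T | (t < l)%N]] :|:
    [set st : 'I_n * 'I_n | (st.1 \in S) && (st.2 \in T) && (st.2 < st.1)%N].
  apply/setP => [[s t]]; rewrite !inE /=.
  apply/idP/idP.
    case/andP => /andP [/orP [/eqP -> | hs] ht] hlt.
      by apply/orP; left; apply/imsetP; exists t => //; rewrite inE ht.
    by rewrite hs ht hlt orbT.
  case/orP.
    by case/imsetP => t' ; rewrite inE => ht' [-> ->]; rewrite eqxx.
  by case/andP => /andP [-> ->] ->; rewrite orbT.
rewrite cardsU card_imset; last by move=> t1 t2 [].
have -> : [set (l, t) | t in [set t in T | (t < l)%N]] :&:
    [set st : 'I_n * 'I_n | (st.1 \in S) && (st.2 \in T) && (st.2 < st.1)%N] = set0.
  apply/setP => [[s t]]; rewrite !inE /=; apply/negP => /andP [/imsetP [t' _ [-> _]]].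
  by rewrite (negbTE hS).
by rewrite cards0 subn0.
Qed.

Lemma wedge_add (a1 a2 b : K) :
  kz_wedge (a1 + a2) b = kz_wedge a1 b + kz_wedge a2 b.
Proof.
apply/ffunP => U; rewrite !ffunE -big_split; apply: eq_bigr => S _.
rewrite -big_split; apply: eq_bigr => T _; case: ifP => _; last exact: (esym (addr0 (0 : R))).
rewrite ffunE mulrDr mulrDl; reflexivity.
Qed.

Lemma wedge0 (b : K) : kz_wedge 0 b = 0.
Proof.
apply/ffunP => U; rewrite !ffunE big1 // => S _; rewrite big1 // => T _.
by case: ifP => // _; rewrite ffunE mulr0 mul0r.
Qed.

Lemma wedge_sum (I : finType) (G : I -> K) (b : K) :
  kz_wedge (\sum_i G i) b = \sum_i kz_wedge (G i) b.
Proof. exact: (big_morph (fun a => kz_wedge a b) (fun a1 a2 => wedge_add a1 a2 b) (wedge0 b)). Qed.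

Lemma W0 (a b : K) : kz_homogeneous 0 a -> kz_wedge a b = (a set0 : R) *: b.
Proof.
move=> H; apply/ffunP => U; rewrite !ffunE (bigD1 set0) //= [X in _ + X]big1; last first.
  move=> S hS; rewrite big1 // => T _; rewrite H ?cards_eq0 // mulr0 mul0r.
  by case: ifP.
rewrite addr0 (bigD1 U) //= [X in _ + X]big1; last first.
  by move=> T hT; rewrite set0U (negbTE hT).
rewrite addr0 set0U eqxx /=.
have -> : [disjoint set0 & U] by rewrite -setI_eq0 set0I.
rewrite /kz_sign.
have -> : [set st : 'I_n * 'I_n | (st.1 \in set0) && (st.2 \in U) && (st.2 < st.1)%N] = set0.
  by apply/setP => st; rewrite !inE.
by rewrite cards0 expr0 mul1r.
Qed.

Lemma setU1D_eq (l : 'I_n) (S : {set 'I_n}) : ((l |: S) :\ l == S) = (l \notin S).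
Proof.
case: (boolP (l \in S)) => h.
  by apply/negbTE/negP => /eqP /setP /(_ l); rewrite !inE eqxx h.
by rewrite setU1K ?eqxx.
Qed.

Lemma WA (l : 'I_n) (c b : K) : kz_wedge (lw l c) b = lw l (kz_wedge c b).
Proof.
apply/ffunP => U; rewrite [in RHS]ffunE [in LHS]ffunE.
rewrite (bigID (fun S : {set 'I_n} => l \in S)) /=.
rewrite [X in _ + X]big1 ?addr0; last first.
  move=> S hS; rewrite big1 // => T _; rewrite ffunE (negbTE hS) mulr0 mul0r.
  by case: ifP.
rewrite (reindex_onto (fun S => l |: S) (fun S => S :\ l)) /=; last first.
  by move=> S hS; rewrite setD1K.
under eq_bigl do rewrite setU11 setU1D_eq /=.
case: (boolP (l \in U)) => hlU; last first.
  rewrite big1 // => S _; rewrite big1 // => T _.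
  case: ifP => // /andP [/eqP E _]; move: hlU; rewrite -E !inE eqxx //.
rewrite ffunE mulr_sumr [RHS](bigID (fun S : {set 'I_n} => l \in S)) /=.
rewrite [X in _ = X + _]big1 ?add0r; last first.
  move=> S hS; rewrite mulr_sumr big1 // => T _.
  case: ifP; last by rewrite mulr0.
  by case/andP => /eqP /setP /(_ l); rewrite !inE eqxx hS.
apply: eq_bigr => S hS; rewrite mulr_sumr; apply: eq_bigr => T _.
case: (boolP (l \in T)) => hlT.
  have -> : [disjoint l |: S & T] = false.
    by apply/negbTE/negP => /disjointFr /(_ (setU11 l S)); rewrite hlT.
  have -> : (S :|: T == U :\ l) = false.
    by apply/negbTE/negP => /eqP /setP /(_ l); rewrite !inE eqxx hlT orbT.
  by rewrite andbF /= mulr0.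
have -> : ((l |: S) :|: T == U) = (S :|: T == U :\ l).
  apply/eqP/eqP => E.
    rewrite -E; apply/setP => s; rewrite !inE.
    by case: (eqVneq s l) => //= ->; rewrite (negbTE hS) (negbTE hlT).
  by rewrite -(setD1K hlU) -E setUA.
rewrite disjU1 //.
case: ifP => [/andP [/eqP E hd] | _]; last by rewrite mulr0.
have EU : U = l |: (S :|: T) by rewrite -(setD1K hlU) E.
rewrite EU ffunE setU11 setU1K // card_ltU1 // ltnn add0n sign_U1 //.
rewrite card_ltU1; last by rewrite !inE negb_or hS hlT.
rewrite ltnn add0n card_ltU // exprD.
rewrite !mulrA; congr (_ * _ * _).
rewrite mulrC -!mulrA; congr (_ * _); rewrite mulrC mulrA; congr (_ * _).
Qed.


Lemma lowerU1 (m k : 'I_n) (T : {set 'I_n}) :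
  lower m (k |: T) = (m < k)%N && lower m T.
Proof.
apply/lowerP/andP => [H|[h1 /lowerP h2] t].
  by split; [apply: H; rewrite setU11 | apply/lowerP => t ht; apply: H; rewrite !inE ht orbT].
by rewrite !inE => /orP [/eqP ->|/h2].
Qed.

Lemma KD (x : 'I_n -> R) (m : 'I_n) (a : K) :
  tail m (kz_d x a) = \sum_l x l *: tail m (tail l a) - kz_d x (tail m a).
Proof.
apply/ffunP => T; rewrite tailE kzB sum_ffunE !kz_dE.
case: (boolP (lower m T)) => hl; last first.
  rewrite big1; last by move=> l _; rewrite kzZ tailE (negbTE hl) mulr0.
  rewrite big1 ?subrr // => k _; rewrite tailE lowerU1 (negbTE hl) andbF mulr0.
  by [].
rewrite big_mkcond [X in _ = _ - X]big_mkcond -sumrB; apply: eq_bigr => k _.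
rewrite kzZ !tailE !lowerU1 (_ : lower m T = true) // andbT !inE.
have hmT := lower_notin hl.
case: (ltngtP k m) => hkm.
- have hkT : k \notin T.
    by apply/negP => /(lowerP _ _ hl) h; move: (ltn_trans h hkm); rewrite ltnn.
  have hne : k != m by apply/eqP => e; move: hkm; rewrite e ltnn.
  rewrite (negbTE hne) (negbTE hkT) /=.
  rewrite card_ltU1 // ltnNge (ltnW hkm) add0n card_lt0; last first.
    by move=> t /(lowerP _ _ hl) h; apply: ltnW; apply: ltn_trans h.
  rewrite (_ : lower k T = true); last first.
    by apply/lowerP => t /(lowerP _ _ hl) h; apply: ltn_trans h.
  by rewrite expr0 mul1r mulr0 subr0.
- have hne : k != m by apply/eqP => e; move: hkm; rewrite e ltnn.
  rewrite (negbTE hne) /= mulr0 sub0r.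
  case: (boolP (k \in T)) => hkT /=; first by rewrite oppr0.
  rewrite card_ltU1 // hkm add1n exprS mulN1r !mulNr setUCA.
  by [].
- have e : k = m by apply: val_inj.
  subst k; rewrite eqxx /= hmT /=.
  by rewrite mulr0 mulr0 subr0.
Qed.

End KZ.


Section Lin.
Variable R : comPzRingType.
Variables M N : lmodType R.
Variable f : M -> N.
Hypothesis Hf : is_linear f.
Lemma linD u v : f (u + v) = f u + f v.
Proof. by have := Hf 1 u v; rewrite !scale1r. Qed.
Lemma lin0 : f 0 = 0.
Proof. have h := linD 0 0; rewrite addr0 in h; apply: (addrI (f 0)); by rewrite addr0 -h. Qed.
Lemma linZ c u : f (c *: u) = c *: f u.
Proof. by have := Hf c u 0; rewrite !addr0 lin0 addr0. Qed.
Lemma linN u : f (- u) = - f u.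
Proof. by rewrite -scaleN1r linZ scaleN1r. Qed.
Lemma linB u v : f (u - v) = f u - f v.
Proof. by rewrite linD linN. Qed.
Lemma lin_sum (I : Type) (r : seq I) (P : pred I) (G : I -> M) :
  f (\sum_(i <- r | P i) G i) = \sum_(i <- r | P i) f (G i).
Proof. exact: (big_morph f linD lin0). Qed.
End Lin.

Unset Implicit Arguments.
Section Act.
Variable R : comPzRingType.
Variable F : nat -> lmodType R.
Variable mu : forall i, F 1%N -> F i -> F i.+1.
Hypothesis Hmu : forall i, is_bilinear (mu i).
Hypothesis Hb : forall i f1 f, mu i.+1 f1 (mu i f1 f) = 0.
Variable n : nat.
Variable w : 'I_n -> F 1%N.
Local Notation K := (koszul R n).

Fixpoint act (p q : nat) : K -> F q -> F (p + q)%N :=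
  match p return K -> F q -> F (p + q)%N with
  | 0 => fun a f => (a set0 : R) *: f
  | p'.+1 => fun a f => \sum_(l : 'I_n) mu (p' + q) (w l) (act p' q (tail l a) f)
  end.

Lemma mu2 i u : is_linear (mu i u). Proof. exact: (Hmu i).1. Qed.
Lemma mu1 i g : is_linear (fun u => mu i u g). Proof. exact: (Hmu i).2. Qed.

Lemma act_linA p q f : is_linear (fun a => act p q a f).
Proof.
elim: p q f => [|p IH] q f c a b /=.
  by rewrite kzD kzZ scalerDl scalerA.
rewrite scaler_sumr -big_split; apply: eq_bigr => l _.
by rewrite tail_lin IH (mu2 _ _).
Qed.

Lemma act_linF p q a : is_linear (act p q a).
Proof.
elim: p q a => [|p IH] q a c u v /=.
  by rewrite scalerDr !scalerA mulrC.
rewrite scaler_sumr -big_split; apply: eq_bigr => l _.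
by rewrite IH (mu2 _ _).
Qed.

Lemma AC m u v g : mu m.+1 u (mu m v g) = - mu m.+1 v (mu m u g).
Proof.
have := Hb m (u + v) g.
rewrite (linD (mu1 m g) u v) (linD (mu1 m.+1 _) u v) !(linD (mu2 m.+1 _)) !Hb add0r addr0.
by move/eqP; rewrite addr_eq0 => /eqP.
Qed.


Lemma lower0 (l : 'I_n) : lower l set0.
Proof. by apply/lowerP => t; rewrite inE. Qed.

Lemma tail_set0 (l : 'I_n) (a : K) : tail l a set0 = a [set l].
Proof. by rewrite tailE lower0 setU0. Qed.

Lemma act0 p q f : act p q 0 f = 0.
Proof. exact: (lin0 (act_linA p q f)). Qed.

Lemma keyK p q (k : 'I_n) (a : K) f :
  act p.+1 q (lw k a) f = mu (p + q) (w k) (act p q a f).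
Proof.
elim: p k a => [|p IH] k a.
  rewrite /= (bigD1 k) //= big1 ?addr0.
    rewrite tail_set0 lwE set11 (card_lt0 (k := k)); last first.
      by move=> t; rewrite inE => /eqP ->.
    by rewrite expr0 mul1r setDv.
  move=> l hl; rewrite tail_set0 lwE inE eq_sym (negbTE hl) scale0r.
  exact: (lin0 (mu2 _ _)).
set Y := fun l => act p q (tail l a) f.
set Z := fun l => mu (p + q).+1 (w k) (mu (p + q) (w l) (Y l)).
set C := mu (p + q).+1 (w k) (\sum_(m : 'I_n) if (k < m)%N then mu (p + q) (w m) (Y m) else 0).
have EB : \sum_(l : 'I_n) (if l == k then C else 0) = C.
  by rewrite -big_mkcond big_pred1_eq.
have E1 : forall l : 'I_n,
  mu (p.+1 + q) (w l) (act p.+1 q (tail l (lw k a)) f) =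
  (if (l < k)%N then Z l else 0) +
  (if l == k then C else 0).
  move=> l; case: (ltngtP l k) => hlk.
  - have hne : l != k by apply/eqP => e; move: hlk; rewrite e ltnn.
    rewrite (negbTE hne) addr0 T2 // (linN (act_linA _ _ _)) IH.
    by rewrite (linN (mu2 _ _)) AC opprK.
  - have hne : l != k by apply/eqP => e; move: hlk; rewrite e ltnn.
    by rewrite (negbTE hne) T3 // act0 (lin0 (mu2 _ _)) add0r.
  - have e : l = k by apply: val_inj.
    subst l; rewrite eqxx add0r T1 /=; congr (mu _ _ _).
    apply: eq_bigr => m _; rewrite T4; case: ifP => // _.
    by rewrite act0 (lin0 (mu2 _ _)).
rewrite [LHS]/= (eq_bigr _ (fun l _ => E1 l)) big_split /= EB /C.
rewrite /= (lin_sum (mu2 _ _)) (lin_sum (mu2 _ _)).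
rewrite [in RHS](eq_bigr (fun l : 'I_n => (if (l < k)%N then Z l else 0) + (if (k < l)%N then Z l else 0))); last first.
  move=> l _; case: (ltngtP l k) => hlk.
  - by rewrite addr0.
  - by rewrite add0r.
  - have e : l = k by apply: val_inj.
    by subst l; rewrite /Z Hb addr0.
rewrite big_split /=; congr (_ + _); apply: eq_bigr => m _.
by case: ifP => // _; rewrite (lin0 (mu2 _ _)).
Qed.


Lemma actS p q (a : K) (f : F q) :
  act p.+1 q a f = \sum_(l : 'I_n) mu (p + q) (w l) (act p q (tail l a) f).
Proof. by []. Qed.

Lemma castF_id m (e : m = m) (v : F m) : castF e v = v.
Proof. by rewrite (eq_irrelevance e erefl). Qed.

Lemma castF_sum m m' (e : m = m') (I : Type) (r : seq I) (P : pred I) (G : I -> F m) :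
  castF e (\sum_(i <- r | P i) G i) = \sum_(i <- r | P i) castF e (G i).
Proof. by case: m' / e. Qed.

Lemma castF_mu m m' (e : m = m') (e' : m.+1 = m'.+1) u (g : F m) :
  castF e' (mu m u g) = mu m' u (castF e g).
Proof. by case: m' / e e'=> e'; rewrite castF_id. Qed.

Lemma castF_add m m' (e : m = m') (u v : F m) : castF e (u + v) = castF e u + castF e v.
Proof. by case: m' / e. Qed.
Lemma castF_scale m m' (e : m = m') c (u : F m) : castF e (c *: u) = c *: castF e u.
Proof. by case: m' / e. Qed.

Lemma hom0 p (a : K) : kz_homogeneous p.+1 a -> a set0 = 0.
Proof. by move=> H; apply: H; rewrite cards0. Qed.

Lemma assoc p p' q (a b : K) (f : F q) : kz_homogeneous p a ->
  act p (p' + q) a (act p' q b f)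
  = castF (esym (addnA p p' q)) (act (p + p') q (kz_wedge a b) f).
Proof.
elim: p a => [|p IH] a Ha.
  rewrite W0 // (linZ (act_linA _ _ _)) /=.
  by rewrite castF_id.
rewrite [in RHS](Ddec (hom0 _ _ Ha)) wedge_sum.
under [in RHS]eq_bigr do rewrite WA.
rewrite (lin_sum (act_linA _ _ _)).
under [in RHS]eq_bigr do rewrite keyK.
rewrite castF_sum /=; apply: eq_bigr => l _.
rewrite IH; last exact: tail_hom.
by rewrite (castF_mu _ _ (esym (addnA p p' q))).
Qed.


Variable x : 'I_n -> R.

Lemma AD i q (a : K) (f : F q) :
  act i.+1 q (kz_d x a) f =
  \sum_(l : 'I_n) (x l *: act i.+1 q (tail l a) f
                   - mu (i + q) (w l) (act i q (kz_d x (tail l a)) f)).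
Proof.
rewrite /= sumrB.
under eq_bigr => m _ do rewrite KD (linB (act_linA _ _ _)) (lin_sum (act_linA _ _ _))
   (linB (mu2 _ _)) (lin_sum (mu2 _ _)).
rewrite sumrB; congr (_ - _).
rewrite exchange_big /=; apply: eq_bigr => l _.
rewrite scaler_sumr; apply: eq_bigr => m _.
by rewrite (linZ (act_linA _ _ _)) (linZ (mu2 _ _)).
Qed.

Variable d : forall i, F i.+1 -> F i.
Hypothesis Hd : forall i, is_linear (d i).
Hypothesis hA0 : forall k (f : F 0%N), d 0%N (mu 0%N (w k) f) = x k *: f.
Hypothesis hA1 : forall j k (f : F j.+1),
  d j.+1 (mu j.+1 (w k) f) = x k *: f - mu j (w k) (d j f).

Lemma kzd_set0 (a : K) : kz_d x a set0 = \sum_(l : 'I_n) x l * a [set l].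
Proof.
rewrite kz_dE; under eq_bigl do rewrite inE.
apply: eq_bigr => l _; rewrite card_lt0 ?expr0 ?mul1r ?setU0 // => t; by rewrite inE.
Qed.

Lemma L0 i (a : K) (f : F 0%N) :
  d (i + 0)%N (act i.+1 0 a f) = act i 0 (kz_d x a) f.
Proof.
elim: i a => [|i IH] a.
  rewrite /= (lin_sum (Hd _)) kzd_set0 scaler_suml; apply: eq_bigr => l _.
  by rewrite hA0 tail_set0 scalerA.
rewrite AD [LHS]/= (lin_sum (Hd _)); apply: eq_bigr => l _.
by rewrite hA1 IH.
Qed.

Lemma L1 i j (a : K) (f : F j.+1) :
  d (i + j.+1)%N (act i.+1 j.+1 a f)
  = act i j.+1 (kz_d x a) f
    + (-1) ^+ i.+1 *: castF (esym (addnS i j)) (act i.+1 j a (d j f)).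
Proof.
elim: i a => [|i IH] a.
  rewrite castF_id /= (lin_sum (Hd _)) kzd_set0 scaler_suml scaler_sumr -big_split.
  apply: eq_bigr => l _.
  rewrite hA1 tail_set0 scalerA (linZ (Hd _)) (linZ (mu2 _ _)).
  by rewrite expr1 scaleN1r.
rewrite (actS i.+1 j.+1) (actS i.+1 j) AD (lin_sum (Hd _)) castF_sum scaler_sumr -big_split.
apply: eq_bigr => l _.
rewrite hA1 IH (castF_mu _ _ (esym (addnS i j))) (linD (mu2 _ _)) (linZ (mu2 _ _)).
rewrite (_ : (-1) ^+ i.+2 = - (-1) ^+ i.+1 :> R); last by rewrite exprS mulN1r.
rewrite scaleNr opprD addrA.
reflexivity.
Qed.

End Act.

Theorem proposition5p1 (R : comPzRingType) (I : R -> Prop)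
    (F : nat -> lmodType R) (d : forall i, F i.+1 -> F i) (phi0 : F 0%N -> R)
    (mu : forall i, F 1%N -> F i -> F i.+1) :
  noetherian R ->
  is_ideal I ->
  free_resolution_of_quotient I d phi0 ->
  (forall i, is_bilinear (mu i)) ->
  (* (a) for i = 0 (d_0 = 0):  d_1(f_1 . f_0) = d_1(f_1) f_0 *)
  (forall (f1 : F 1%N) (f : F 0%N), d 0%N (mu 0%N f1 f) = phi0 (d 0%N f1) *: f) ->
  (* (a) for i = j+1:  d_(j+2)(f_1 . f) = d_1(f_1) f - f_1 . d_(j+1)(f) *)
  (forall j (f1 : F 1%N) (f : F j.+1),
      d j.+1 (mu j.+1 f1 f) = phi0 (d 0%N f1) *: f - mu j f1 (d j f)) ->
  (* (b) *)
  (forall i (f1 : F 1%N) (f : F i), mu i.+1 f1 (mu i f1 f) = 0) ->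
  forall (n : nat) (x : 'I_n -> R),
    regular_sequence x ->
    (forall r, ideal_gen x r -> I r) ->
    exists act : forall p q, koszul R n -> F q -> F (p + q)%N,
      DG_koszul_module x d act.
Proof.
move=> _ HI [Hfree Hd [Hphi Hbij] [Hcx Hex] HIq] Hmu hA0 hA1 Hb n x Hreg Hsub.
have hw : forall k : 'I_n, exists w0 : F 1%N, phi0 (d 0%N w0) = x k.
  move=> k; apply/HIq; apply: Hsub; exists (fun i => (i == k)%:R).
  rewrite (bigD1 k) ?ltn_ord //= eqxx mul1r big1 ?addr0 // => i /andP [_ hi].
  by rewrite (negbTE hi) mul0r.
case: (fin_all_exists hw) => w Hw.
have hA0' : forall k (f : F 0%N), d 0%N (mu 0%N (w k) f) = x k *: f.
  by move=> k f; rewrite hA0 Hw.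
have hA1' : forall j k (f : F j.+1),
    d j.+1 (mu j.+1 (w k) f) = x k *: f - mu j (w k) (d j f).
  by move=> j k f; rewrite hA1 Hw.
exists (act R F mu n w); split.
- split.
    move=> p q; split => [u|v]; [exact: act_linF | exact: act_linA].
  by move=> q f; rewrite /= ffunE eqxx scale1r.
- by move=> p p' q a b f Ha _; apply: assoc.
- by move=> j a f _; rewrite /= (linZ (Hd j)).
- by move=> i a f _; apply: L0 => //; apply: Hmu.
- by move=> i j a f _; apply: L1 => //; apply: Hmu.
Qed.
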